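(* Let $\mathcal{X}$ be a finite set and $\underline{Q}$ a lower transition rate operator on $\mathcal{L}(\mathcal{X})$. Then for any $t>0$: $\underline{Q}$ is ergodic if and only if $\underline{T}_t$ is ergodic.
   Context: $\mathcal{L}(\mathcal{X})$ is the set of real-valued functions on $\mathcal{X}$ with pointwise operations and order, real constants identified with constant functions, $\mathbb{I}_y$ the indicator of $\{y\}$. A lower transition rate operator is a map $\underline{Q}\colon\mathcal{L}(\mathcal{X})\to\mathcal{L}(\mathcal{X})$ such that for all $f,g$, $\lambda\ge0$, $\mu\in\mathbb{R}$, $x,y\in\mathcal{X}$: $\underline{Q}(\mu)=0$; $\underline{Q}(f+g)\ge\underline{Q}f+\underline{Q}g$; $\underline{Q}(\lambda f)=\lambda\underline{Q}f$; $x\ne y\Rightarrow\underline{Q}(\mathbb{I}_y)(x)\ge0$. For each $f$, $t\mapsto\underline{T}_tf$ is the unique solution on $[0,\infty)$ of $\frac{d}{dt}\underline{T}_tf=\underline{Q}\,\underline{T}_tf$ with $\underline{T}_0f=f$ (existence and uniqueness are known); $\underline{T}_t$ denotes the operator $f\mapsto\underline{T}_tf$. $\underline{Q}$ is ergodic if for all $f$, $\lim_{t\to\infty}\underline{T}_tf$ exists and is a constant function. A map $\underline{T}\colon\mathcal{L}(\mathcal{X})\to\mathcal{L}(\mathcal{X})$ (here $\underline{T}=\underline{T}_t$) is ergodic if for all $f$, $\lim_{n\to\infty}\underline{T}^nf$ exists and is a constant function, where $\underline{T}^n$ is the $n$-fold composition. *)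

(* Defs.v *)
From HB Require Import structures.
From mathcomp Require Import all_boot all_order all_algebra.
From mathcomp Require Import all_classical all_reals all_analysis.
Set Implicit Arguments. Unset Strict Implicit. Unset Printing Implicit Defensive.
Import Order.TTheory GRing.Theory Num.Theory.
Import numFieldNormedType.Exports.
Local Open Scope ring_scope.
Local Open Scope classical_set_scope.

Section Defs.
Variables (R : realType) (X : finType).

Definition indic (y : X) : X -> R := fun z => if z == y then 1 else 0.

Definition lower_rate_op (Q : (X -> R) -> (X -> R)) : Prop :=
  [/\ (forall mu : R, Q (fun _ => mu) = (fun _ => 0)),
      (forall f g x, Q f x + Q g x <= Q (fun z => f z + g z) x),
      (forall (lam : R) f, 0 <= lam -> Q (fun z => lam * f z) = (fun x => lam * Q f x)) &
      (forall x y : X, x != y -> 0 <= Q (indic y) x)].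

(* T is the (unique) solution semigroup: for every f, t |-> T t f solves
   d/dt T_t f = Q (T_t f) on [0, +oo) (right derivative at 0), T_0 f = f. *)
Definition lower_semigroup (Q : (X -> R) -> (X -> R))
    (T : R -> (X -> R) -> (X -> R)) : Prop :=
  forall f : X -> R,
    T 0 f = f /\
    (forall x : X,
       (forall t : R, 0 < t -> is_derive t 1 (fun s => T s f x) (Q (T t f) x)) /\
       ((fun h : R => h^-1 * (T h f x - f x)) @ 0^'+ --> Q f x)).

(* Q is ergodic: lim_{t -> oo} T_t f exists and is constant, for all f *)
Definition ergodic_rate (T : R -> (X -> R) -> (X -> R)) : Prop :=
  forall f : X -> R, exists c : R,
    forall x : X, (fun t : R => T t f x) @ +oo --> c.

Definition ergodic_map (T : (X -> R) -> (X -> R)) : Prop :=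
  forall f : X -> R, exists c : R,
    forall x : X, (fun n : nat => iter n T f x) @ \oo --> c.

End Defs.

(* Main.v *)
Require Import Defs.
From HB Require Import structures.
From mathcomp Require Import all_boot all_order all_algebra.
From mathcomp Require Import all_classical all_reals all_analysis.
From mathcomp Require Import ring lra.
Import Order.TTheory GRing.Theory Num.Theory.
Import numFieldNormedType.Exports.
Local Open Scope ring_scope.
Local Open Scope classical_set_scope.

Section Deriv.
Variable R : realType.

Lemma sqp_rem (z h : R) :
  `|Num.max (h + z) 0 ^+ 2 - Num.max z 0 ^+ 2 - 2 * Num.max z 0 * h| <= h ^+ 2.
Proof.
rewrite ler_norml; case: (lerP 0 z) => hz; case: (lerP 0 (h + z)) => hhz.
- apply/andP; split; nra.
- apply/andP; split; nra.
- apply/andP; split; nra.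
- apply/andP; split; nra.
Qed.

Lemma sqp_derive (z : R) :
  is_derive z 1 (fun y : R => Num.max y 0 ^+ 2) (2 * Num.max z 0).
Proof.
set f := (fun y : R => Num.max y 0 ^+ 2).
have L : (fun h : R => h^-1 *: ((f \o shift z) (h *: 1) - f z)) @ 0^' --> 2 * Num.max z 0.
  apply/cvgrPdist_le => e e0.
  near=> h.
  have hn0 : h != 0 by near: h; exact: nbhs_dnbhs_neq.
  have he : `|h| < e by near: h; exact: (nbhs_dnbhs (nbhs0_lt e0)).
  rewrite /f /= [h%:A]mulr1 -normrN opprB.
  have hp : 0 < `|h| by rewrite normr_gt0.
  apply: le_trans (ltW he).
  rewrite -(ler_pM2l hp) -normrM mulrBr mulrA mulfV // mul1r.
  have -> : `|h| * `|h| = h ^+ 2 by rewrite -normrM -expr2 ger0_norm // sqr_ge0.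
  by rewrite (mulrC h); exact: sqp_rem.
apply: (DeriveDef (cvgP _ L)).
exact: cvg_lim.
Unshelve. all: by end_near. Qed.
End Deriv.

Section QProps.
Variables (R : realType) (X : finType) (Q : (X -> R) -> X -> R).
Hypothesis HQ : lower_rate_op Q.

Lemma Q0 : Q (fun _ => 0) = fun _ => 0.
Proof. by case: HQ => H _ _ _; apply: H. Qed.

Lemma Qsup f g x : Q f x + Q g x <= Q (fun z => f z + g z) x.
Proof. by case: HQ => _ H _ _; apply: H. Qed.

Lemma Qhom (lam : R) f x : 0 <= lam -> Q (fun z => lam * f z) x = lam * Q f x.
Proof. by case: HQ => _ _ H _ l0; rewrite H. Qed.

Lemma Qind x y : x != y -> 0 <= Q (Defs.indic R y) x.
Proof. by case: HQ => _ _ _ H; apply: H. Qed.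

Lemma Qsum (I : Type) (r : seq I) (F : I -> X -> R) x :
  \sum_(i <- r) Q (F i) x <= Q (fun z => \sum_(i <- r) F i z) x.
Proof.
elim: r => [|a r IH].
  have -> : (fun z => \sum_(i <- [::]) F i z) = (fun _ => 0).
    by apply/funext => z; rewrite big_nil.
  by rewrite Q0 big_nil.
have -> : (fun z => \sum_(i <- a :: r) F i z) = (fun z => F a z + \sum_(i <- r) F i z).
  by apply/funext => z; rewrite big_cons.
rewrite big_cons; apply: le_trans _ (Qsup _ _ _); exact: lerD.
Qed.

Lemma Qshift f m : Q (fun z => f z + m) = Q f.
Proof.
apply/funext => x; apply/le_anti/andP; split.
  have := Qsup (fun z => f z + m) (fun _ => - m) x.
  have -> : (fun z => f z + m + - m) = f by apply/funext => z; rewrite addrK.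
  by case: HQ => H _ _ _; rewrite H addr0.
have := Qsup f (fun _ => m) x.
by case: HQ => H _ _ _; rewrite H addr0.
Qed.

Lemma Qdecomp f : f = fun z => \sum_(y : X) f y * Defs.indic R y z.
Proof.
apply/funext => z; rewrite (bigD1 z) //= /Defs.indic eqxx mulr1 big1 ?addr0 //.
by move=> y yz; rewrite eq_sym (negbTE yz) mulr0.
Qed.

Lemma Qnonneg g x : (forall z, 0 <= g z) -> g x = 0 -> 0 <= Q g x.
Proof.
move=> g0 gx; rewrite [g in Q g]Qdecomp.
apply: le_trans _ (Qsum _ _ _ x); apply: sumr_ge0 => y _.
rewrite Qhom //; case: (eqVneq x y) => [<-|xy]; first by rewrite gx mul0r.
by rewrite mulr_ge0 // Qind.
Qed.

Definition Bnd := \sum_x \sum_y `|Q (fun z => - Defs.indic R y z) x|.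

Lemma QnegB N x : (forall z, 0 <= N z) -> - (Bnd * \sum_y N y) <= Q (fun z => - N z) x.
Proof.
move=> N0.
have -> : (fun z => - N z) = fun z => \sum_y N y * (- Defs.indic R y z).
  by apply/funext => z; rewrite [in LHS](Qdecomp N) -sumrN; apply: eq_bigr => y _; rewrite mulrN.
apply: le_trans _ (Qsum _ _ _ x); rewrite mulr_sumr -sumrN; apply: ler_sum => y _.
rewrite Qhom // -mulNr mulrC ler_wpM2l // lerNl.
apply: le_trans (_ : _ <= `|Q (fun z => - Defs.indic R y z) x|) _.
  by rewrite -normrN ler_norm.
rewrite /Bnd (bigD1 x) //= (bigD1 y) //= -addrA lerDl.
apply: addr_ge0; first by apply: sumr_ge0.
by apply: sumr_ge0 => *; apply: sumr_ge0.
Qed.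

Lemma Qkey U V c x : c < U x - V x ->
  Q U x - Q V x <= Bnd * \sum_y Num.max (U y - V y - c) 0.
Proof.
move=> cx.
have h1 := Qsup U (fun z => V z - U z) x.
have e1 : (fun z => U z + (V z - U z)) = V by apply/funext => z; rewrite addrC subrK.
have e2 : (fun z => V z - U z) = (fun z => (c - (U z - V z)) + - c).
  by apply/funext => z; rewrite addrAC subrr add0r opprB.
have e3 : (fun z => c - (U z - V z)) =
   (fun z => Num.max (c - (U z - V z)) 0 + - Num.max (U z - V z - c) 0).
  apply/funext => z; set a := c - (U z - V z).
  have -> : U z - V z - c = - a by rewrite /a opprB.
  case: (lerP 0 a) => h.
    have h' : - a <= 0 by rewrite oppr_le0.
    by rewrite (max_idPr h') subr0.
  have h' : 0 <= - a by rewrite oppr_ge0 ltW.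
  by rewrite (max_idPl h') opprK add0r.
rewrite e1 e2 Qshift e3 in h1.
have h2 := Qsup (fun z => Num.max (c - (U z - V z)) 0) (fun z => - Num.max (U z - V z - c) 0) x.
have h3 := QnegB (fun z => Num.max (U z - V z - c) 0) x.
have h4 := Qnonneg (fun z => Num.max (c - (U z - V z)) 0) x.
have h5 : 0 <= Q (fun z => Num.max (c - (U z - V z)) 0) x.
  apply: h4 => [z|]; first by rewrite le_max lexx orbT.
  by apply/max_idPr; rewrite subr_le0 ltW.
have h6 : - (Bnd * \sum_y Num.max (U y - V y - c) 0) <=
     Q (fun z => - Num.max (U z - V z - c) 0) x.
  by apply: h3 => z; rewrite le_max lexx orbT.
lra.
Qed.
End QProps.

Section Comparison.
Variables (R : realType) (X : finType) (Q : (X -> R) -> X -> R).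
Hypothesis HQ : lower_rate_op Q.

Definition sol (u : R -> X -> R) := forall x : X,
  (forall s : R, 0 < s -> is_derive s 1 (fun t : R => u t x) (Q (u s) x)) /\
  (fun t : R => u t x) @ (0:R)^'+ --> u 0 x.

Lemma is_derive_bsum (r : seq X) (F : X -> R -> R) (dF : X -> R) (s : R) :
  (forall x, is_derive s 1 (F x) (dF x)) ->
  is_derive s 1 (fun t => \sum_(x <- r) F x t) (\sum_(x <- r) dF x).
Proof.
move=> H; elim: r => [|a r IH].
  have -> : (fun t => \sum_(x <- [::]) F x t) = cst 0.
    by apply/funext => t; rewrite big_nil.
  rewrite big_nil; exact: is_derive_cst.
have -> : (fun t => \sum_(x <- a :: r) F x t) = F a + (fun t => \sum_(x <- r) F x t).
  by apply/funext => t; rewrite big_cons.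
rewrite big_cons; exact: is_deriveD.
Qed.

Variables (u v : R -> X -> R) (c : R).
Hypotheses (su : sol u) (sv : sol v) (h0 : forall x, u 0 x - v 0 x <= c).

Let w x t := u t x - v t x - c.
Let sq (y : R) := Num.max y 0 ^+ 2.
Let e (t : R) : R := \sum_x sq (w x t).
Let K : R := 2 * @Bnd R X Q * #|X|%:R.
Let ex (t : R) : R := expR (- K * t).
Let g (t : R) : R := e t * ex t.
Let de (s : R) : R := \sum_x (2 * Num.max (w x s) 0 * (Q (u s) x - Q (v s) x)).

Lemma w_derive (x : X) (s : R) : 0 < s -> is_derive s 1 (w x) (Q (u s) x - Q (v s) x).
Proof.
move=> s0; have [d1 _] := su x; have [d2 _] := sv x.
have H := is_deriveB (is_deriveB (d1 s s0) (d2 s s0)) (is_derive_cst c s 1).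
rewrite subr0 in H; exact: H.
Qed.

Lemma e_derive (s : R) : 0 < s -> is_derive s 1 e (de s).
Proof.
move=> s0; apply: is_derive_bsum => x.
have H := is_derive1_comp (@sqp_derive R (w x s : R)) (@w_derive x s s0).
exact: H.
Qed.

Lemma Bnd_ge0 : 0 <= @Bnd R X Q.
Proof. by apply: sumr_ge0 => x _; apply: sumr_ge0. Qed.

Lemma sq_sum_le (a : X -> R) :
  (\sum_x a x) * (\sum_x a x) <= #|X|%:R * \sum_x a x ^+ 2.
Proof.
have -> : (\sum_x a x) * (\sum_x a x) = \sum_x \sum_y a x * a y.
  by rewrite mulr_suml; apply: eq_bigr => x _; rewrite mulr_sumr.
have H : \sum_x \sum_y (2 * (a x * a y)) <= \sum_x \sum_y (a x ^+ 2 + a y ^+ 2).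
  apply: ler_sum => x _; apply: ler_sum => y _.
  have := sqr_ge0 (a x - a y); nra.
have E : \sum_x \sum_y (a x ^+ 2 + a y ^+ 2) = 2 * (#|X|%:R * \sum_x a x ^+ 2).
  have E1 : forall x, \sum_y (a x ^+ 2 + a y ^+ 2) = #|X|%:R * a x ^+ 2 + \sum_y a y ^+ 2.
    by move=> x; rewrite big_split /= sumr_const mulr_natl.
  under eq_bigr do rewrite E1.
  rewrite big_split /= -mulr_sumr sumr_const -mulr_natl.
  have -> : #|@predT X| = #|X| by [].
  ring.
have H2 : \sum_x \sum_y (2 * (a x * a y)) = 2 * \sum_x \sum_y a x * a y.
  by rewrite mulr_sumr; apply: eq_bigr => x _; rewrite mulr_sumr.
rewrite H2 E in H; lra.
Qed.

Lemma de_le (s : R) : de s <= K * e s.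
Proof.
set a := fun x => Num.max (w x s) 0.
set S := \sum_y a y.
have step1 : forall x, 2 * a x * (Q (u s) x - Q (v s) x) <= 2 * a x * (@Bnd R X Q * S).
  move=> x; case: (boolP (w x s <= 0)) => h.
    by rewrite /a (max_idPr h) mulr0 !mul0r.
  apply: ler_wpM2l; first by rewrite mulr_ge0 // le_max lexx orbT.
  apply: (@Qkey R X Q HQ (u s) (v s) c x).
  by rewrite -subr_gt0; rewrite -ltNge in h.
have step2 : de s <= 2 * @Bnd R X Q * (S * S).
  apply: le_trans (ler_sum _ (fun x _ => step1 x)) _.
  rewrite -mulr_suml /S -mulr_sumr.
  set T := \sum_y a y; set B := Bnd R X Q.
  have -> : 2 * T * (B * T) = 2 * B * (T * T) by ring.
  by [].
apply: le_trans step2 _.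
rewrite /K -[2 * _ * _ * e s]mulrA.
apply: ler_wpM2l; first by rewrite mulr_ge0 ?Bnd_ge0.
exact: (sq_sum_le a).
Qed.

Lemma exp_derive (s : R) : is_derive s 1 ex (ex s * - K).
Proof.
have H1 := is_deriveZ (- K) (is_derive_id s (1 : R)).
have H2 := is_derive1_comp (is_derive_expR (- K * s)) H1.
rewrite /ex; apply: is_derive_eq H2 _.
by rewrite [(- K)%:A]mulr1.
Qed.

Definition dg (s : R) := e s * (ex s * - K) + ex s * de s.

Lemma g_derive (s : R) : 0 < s -> is_derive s 1 g (dg s).
Proof.
move=> s0; have H := is_deriveM (@e_derive s s0) (exp_derive s).
exact: H.
Qed.

Lemma dg_le0 (s : R) : dg s <= 0.
Proof.
have ex0 : 0 < ex s by apply: expR_gt0.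
have H := ler_wpM2l (ltW ex0) (de_le s).
rewrite /dg; lra.
Qed.

Lemma cvg_bsum (F : set_system R) (FF : Filter F) (r : seq X)
   (G : X -> R -> R) (l : X -> R) :
  (forall x, G x @ F --> l x) ->
  (fun t => \sum_(x <- r) G x t) @ F --> \sum_(x <- r) l x.
Proof.
move=> H; elim: r => [|a r IH].
  have -> : (fun t => \sum_(x <- [::]) G x t) = cst 0.
    by apply/funext => t; rewrite big_nil.
  rewrite big_nil; exact: cvg_cst.
have -> : (fun t => \sum_(x <- a :: r) G x t) = G a + (fun t => \sum_(x <- r) G x t).
  by apply/funext => t; rewrite big_cons.
rewrite big_cons; exact: cvgD.
Qed.

Lemma g_right0 : g t @[t --> (0:R)^'+] --> g 0.
Proof.
have csq : forall y : R, {for y, continuous sq}.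
  move=> y; apply: differentiable_continuous; apply/derivable1_diffP.
  by case: (sqp_derive R y).
have cw : forall x, w x t @[t --> (0:R)^'+] --> w x 0.
  move=> x; have [_ hu] := su x; have [_ hv] := sv x.
  have H := cvgB (cvgB hu hv) (cvg_cst c).
  exact: H.
have ce : e t @[t --> (0:R)^'+] --> e 0.
  apply: cvg_bsum => x.
  exact: (cvg_comp _ _ (cw x) (csq (w x 0))).
have cex : ex t @[t --> (0:R)^'+] --> ex 0.
  apply: cvg_at_right_filter.
  apply: differentiable_continuous; apply/derivable1_diffP.
  by case: (exp_derive 0).
exact: cvgM.
Qed.

Lemma e_at0 : e 0 = 0.
Proof.
rewrite /e big1 // => x _; have h := h0 x; rewrite -subr_le0 in h.
by rewrite /sq (max_idPr h) expr2 mul0r.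
Qed.

Lemma g_le0 (b : R) : 0 < b -> g b <= 0.
Proof.
move=> b0.
apply/ler_addgt0Pr => eps eps0; rewrite add0r.
have hc := g_right0; rewrite (_ : g 0 = 0) in hc; last by rewrite /g e_at0 mul0r.
near (0:R)^'+ => d.
have d0 : 0 < d by near: d; exact: nbhs_right_gt.
have db : d < b by near: d; exact: nbhs_right_lt.
have gd : g d < eps.
  near: d; move/cvgrPdist_lt: hc => /(_ eps eps0); apply: filterS => t.
  by rewrite sub0r normrN; apply: le_lt_trans (ler_norm _).
have dpos : forall x, x \in `[d, b]%R -> 0 < x.
  by move=> x; rewrite in_itv /= => /andP[h1 _]; apply: lt_le_trans h1.
have cont : {within `[d, b], continuous g}.
  apply: derivable_within_continuous => x xin.
  by case: (@g_derive x (dpos x xin)).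
have [z zin Hm] := MVT db (fun x xin => @g_derive x (dpos x (subset_itv_oo_cc xin))) cont.
have : dg z * (b - d) <= 0 by rewrite mulr_le0_ge0 ?dg_le0 // subr_ge0 ltW.
rewrite -Hm => H; apply: ltW; lra.
Unshelve. all: by end_near.
Qed.

Lemma comparison (b : R) : 0 <= b -> forall x, u b x - v b x <= c.
Proof.
rewrite le_eqVlt => /orP[/eqP <-|b0] x; first exact: h0.
have exb : 0 < ex b by apply: expR_gt0.
have eb : e b <= 0.
  by have := @g_le0 b b0; rewrite /g pmulr_lle0.
have tx : sq (w x b) <= 0.
  apply: le_trans eb; rewrite /e (bigD1 x) //= lerDl.
  by apply: sumr_ge0 => y _; rewrite /sq sqr_ge0.
rewrite -subr_le0; case: (boolP (w x b <= 0)) => // h.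
rewrite -ltNge in h; move: tx; rewrite /sq (max_idPl (ltW h)).
by rewrite leNgt exprn_gt0.
Qed.

End Comparison.

Section Main.
Variables (R : realType) (X : finType) (Q : (X -> R) -> X -> R)
  (T : R -> (X -> R) -> (X -> R)).
Hypotheses (HQ : lower_rate_op Q) (HT : lower_semigroup Q T).

Lemma T0 f : T 0 f = f.
Proof. by case: (HT f). Qed.

Lemma sol_T f : sol R X Q (fun s => T s f).
Proof.
move=> x; have [_ /(_ x) [Hd Hq]] := HT f; split => //.
rewrite T0.
have L : (fun h : R => f x + h * (h^-1 * (T h f x - f x))) @ (0:R)^'+ --> f x + 0 * Q f x.
  apply: cvgD; first exact: cvg_cst.
  apply: cvgM => //; apply: cvg_at_right_filter; exact: cvg_id.
rewrite mul0r addr0 in L.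
apply: cvg_trans L; apply: near_eq_cvg.
near=> h; have h0 : 0 < h by near: h; exact: nbhs_right_gt.
by rewrite mulrA mulfV ?gt_eqF // mul1r addrC subrK.
Unshelve. all: by end_near.
Qed.

Lemma sol_cst (k : R) : sol R X Q (fun _ _ => k).
Proof.
move=> x; split; last exact: cvg_cst.
move=> s _; case: HQ => H _ _ _; rewrite H; exact: is_derive_cst.
Qed.

Lemma sol_shift f r : 0 < r -> sol R X Q (fun s => T (s + r) f).
Proof.
move=> r0 x; have [_ /(_ x) [Hd _]] := HT f; split.
  move=> s s0; have := @is_derive1_comp R (fun t => T t f x) (shift r) s _ _ (Hd (s + r) (addr_gt0 s0 r0)) (is_derive_shift s 1 r).
  by rewrite mulr1.
have c1 : {for r, continuous (fun t => T t f x)}.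
  apply: differentiable_continuous; apply/derivable1_diffP.
  by case: (Hd r r0).
have c2 : (fun t : R => t + r) @ (0:R)^'+ --> r.
  rewrite -[X in _ --> X]add0r; apply: cvgD; last exact: cvg_cst.
  apply: cvg_at_right_filter; exact: cvg_id.
rewrite add0r; exact: (cvg_comp _ _ c2 c1).
Qed.

Lemma semigroup f r s : 0 <= r -> 0 <= s -> T (s + r) f = T s (T r f).
Proof.
rewrite le_eqVlt => /orP[/eqP <-|r0] s0; first by rewrite addr0 T0.
apply/funext => x; apply/le_anti/andP; split; rewrite -subr_le0.
  apply: (@comparison R X Q HQ _ _ 0 (@sol_shift f r r0) (sol_T (T r f))) => // y.
  by rewrite add0r T0 subrr.
apply: (@comparison R X Q HQ _ _ 0 (sol_T (T r f)) (@sol_shift f r r0)) => // y.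
by rewrite add0r T0 subrr.
Qed.

Lemma iterT f t n : 0 <= t -> iter n (T t) f = T (n%:R * t) f.
Proof.
move=> t0; elim: n => [|n IH]; first by rewrite mul0r T0.
rewrite iterS IH -semigroup ?mulr_ge0 //.
by rewrite mulrS mulrDl mul1r.
Qed.

Lemma nonexp g (k eps : R) : (forall y, `|g y - k| <= eps) ->
  forall s, 0 <= s -> forall x, `|T s g x - k| <= eps.
Proof.
move=> H s s0 x; rewrite ler_norml; apply/andP; split.
  rewrite lerNl opprB.
  apply: (@comparison R X Q HQ _ _ eps (sol_cst k) (sol_T g)) => // y.
  by rewrite T0; have := H y; rewrite ler_norml => /andP[h _]; lra.
apply: (@comparison R X Q HQ _ _ eps (sol_T g) (sol_cst k)) => // y.
by rewrite T0; have := H y; rewrite ler_norml => /andP[_ h].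
Qed.

End Main.

Lemma cvg_bsum_nat (R : realType) (X : finType) (r : seq X) (G : X -> nat -> R) (l : X -> R) :
  (forall x, G x @ \oo --> l x) ->
  (fun t => \sum_(x <- r) G x t) @ \oo --> \sum_(x <- r) l x.
Proof.
move=> H; elim: r => [|a r IH].
  have -> : (fun t => \sum_(x <- [::]) G x t) = cst 0.
    by apply/funext => t; rewrite big_nil.
  rewrite big_nil; exact: cvg_cst.
have -> : (fun t => \sum_(x <- a :: r) G x t) = G a + (fun t => \sum_(x <- r) G x t).
  by apply/funext => t; rewrite big_cons.
rewrite big_cons; exact: cvgD.
Qed.

Theorem proposition9 (R : realType) (X : finType)
    (Q : (X -> R) -> (X -> R)) (T : R -> (X -> R) -> (X -> R)) :
  lower_rate_op Q -> lower_semigroup Q T ->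
  forall t : R, 0 < t -> (ergodic_rate T <-> ergodic_map (T t)).
Proof.
move=> HQ HT t t0; split.
- move=> erg f; have [c Hc] := erg f; exists c => x.
  have E : (fun n : nat => iter n (T t) f x) = (fun s => T s f x) \o (fun n : nat => n%:R * t).
    by apply/funext => n; rewrite /= (@iterT R X Q T HQ HT) // ltW.
  rewrite E; apply: cvg_comp (Hc x).
  apply/cvgryPge => A.
  move: (@cvgr_idn R); move/cvgryPge => /(_ (A / t)).
  by apply: filterS => n; rewrite ler_pdivrMr.
- move=> erg f; have [c Hc] := erg f; exists c => x.
  set D := fun n => \sum_y `|c - iter n (T t) f y|.
  have cD : D n @[n --> \oo] --> 0.
    have -> : (0 : R) = \sum_(y : X) 0 by rewrite big1.
    apply: cvg_bsum_nat => y.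
    apply/cvgrPdist_le => e e0; move/cvgrPdist_le: (Hc y) => /(_ e e0).
    by apply: filterS => n; rewrite sub0r normrN normr_id.
  apply/cvgrPdist_le => eps eps0.
  move/cvgrPdist_le: cD => /(_ eps eps0) [N _ HN].
  near=> s.
  have hs : N.+1%:R * t <= s by near: s; apply: nbhs_pinfty_ge; rewrite num_real.
  have st0 : 0 <= s / t.
    by rewrite divr_ge0 ?ltW //; apply: le_trans hs; rewrite mulr_ge0 ?ltW.
  set n := Num.truncn (s / t).
  have /andP[hn1 hn2] := truncn_itv st0.
  have Nn : (N <= n)%N.
    rewrite truncn_ge_nat // ler_pdivlMr //.
  have r0 : 0 <= s - n%:R * t by rewrite subr_ge0 -ler_pdivlMr.
  have -> : T s f x = T (s - n%:R * t) (iter n (T t) f) x.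
    by rewrite (@iterT R X Q T HQ HT f t n (ltW t0)) -(@semigroup R X Q T HQ HT f _ _ (mulr_ge0 (ler0n _ _) (ltW t0)) r0) subrK.
  rewrite distrC; apply: (@nonexp R X Q T HQ HT) => // y.
  apply: le_trans (_ : D n <= eps).
    by rewrite distrC /D (bigD1 y) //= lerDl sumr_ge0.
  by have := HN n Nn; rewrite sub0r normrN ger0_norm // sumr_ge0.
Unshelve. all: by end_near.
Qed.
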